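(* Let $n\in\mathbb{N}$ with $n>500$, let $n_1,n_2,n_3,n_4$ be nonnegative integers with $\sum_{i=1}^4n_i=n$, and let $\lambda_i=\frac{n_i}{n}$ for $i=1,\dots,4$. Then \[ \frac{n!}{n_1!\,n_2!\,n_3!\,n_4!}\prod_{i=1}^4\lambda_i^{n_i}>\frac{1}{n^2}. \]
   Context: The convention $0^0=1$ is used. *)

(* Defs.v *)
From mathcomp Require Import all_boot all_order all_algebra.

(* Main.v *)
Require Import Defs.
From mathcomp Require Import all_boot all_order all_algebra.
From mathcomp Require Import zify ring lra.
Import Order.TTheory GRing.Theory Num.Theory.

Lemma trunc (M N : nat) : (M^N * (6*M^3 + 6*(N+3)*M^2 + 3*(N+3)*(N+2)*M + (N+3)*(N+2)*(N+1)) <= 6 * (M+1)^(N+3))%N.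
Proof.
elim: N => [|N IH]; first by apply: eq_leq; rewrite expn0; ring.
set p := M^N in IH *.
set q := (M+1)^(N+3) in IH *.
have -> : M^N.+1 = M * p by rewrite expnS.
have -> : (M+1)^(N.+1+3) = (M+1)*q by rewrite addSn expnS.
have E : (M+1) * (p * (6*M^3 + 6*(N+3)*M^2 + 3*(N+3)*(N+2)*M + (N+3)*(N+2)*(N+1)))
   = M * p * (6 * M ^ 3 + 6 * (N.+1 + 3) * M ^ 2 + 3 * (N.+1 + 3) * (N.+1 + 2) * M +
   (N.+1 + 3) * (N.+1 + 2) * (N.+1 + 1)) + p * ((N+3)*(N+2)*(N+1)) by ring.
apply: leq_trans (leq_addr (p * ((N+3)*(N+2)*(N+1))) _) _.
rewrite -E (mulnCA 6 (M+1) q). exact: leq_mul (leqnn _) IH.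
Qed.
Lemma L1 j : (j+3)^(2*j+5) * (j+1)^(2*j+3) <= (j+2)^(4*j+8).
Proof.
have T := trunc ((j+1)*(j+3)) (2*j).
set M := (j+1)*(j+3) in T *.
have E1 : (j+2)^(4*j+8) = (M+1)^(2*j+3) * (j+2)^2.
  have -> : M+1 = (j+2)^2 by rewrite /M; ring.
  by rewrite -expnM -expnD; congr (_ ^ _); ring.
have E2 : (j+3)^(2*j+5) * (j+1)^(2*j+3) = M^(2*j) * (M^3 * (j+3)^2).
  rewrite /M !expnMn !expnD; ring.
rewrite E1 E2.
set P := (X in M ^ (2 * j) * X <= _) in T.
have E3 : P * (j+2)^2 = 6 * (M^3 * (j+3)^2) + (78 + 220*j + 220*j^2 + 96*j^3 + 20*j^4 + 2*j^5).
  rewrite /P /M; ring.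
rewrite -(leq_pmul2l (_ : 0 < 6)) // mulnCA.
apply: (@leq_trans (M^(2*j) * (P * (j+2)^2))).
  by rewrite leq_mul2l E3 leq_addr orbT.
rewrite mulnA mulnA; apply: leq_mul => //.

Qed.

Local Open Scope ring_scope.
Section S.
Variable R : realFieldType.
Definition w (k : nat) : R := (k.+1%:R / k%:R) ^+ (2*k+1).
Lemma w_ge0 k : 0 <= w k.
Proof. by rewrite /w exprn_ge0 // divr_ge0. Qed.
Lemma L2 k : (0 < k)%N -> w k.+1 <= w k.
Proof.
case: k => // j _; rewrite /w !expr_div_n.
have p1 : (0:R) < j.+2%:R ^+ (2 * j.+2 + 1) by rewrite exprn_gt0 // ltr0n.
have p2 : (0:R) < j.+1%:R ^+ (2 * j.+1 + 1) by rewrite exprn_gt0 // ltr0n.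
rewrite ler_pdivrMr // mulrAC ler_pdivlMr // -!natrX -!natrM ler_nat -expnD.
have := L1 j.
have -> : (4 * j + 8 = 2 * j.+1 + 1 + (2 * j.+2 + 1))%N by lia.
have -> : (2 * j.+2 + 1 = 2*j+5)%N by lia.
have -> : (2 * j.+1 + 1 = 2*j+3)%N by lia.
by rewrite !addn3 !addn1 !addn2.
Qed.
Lemma L3 i j : (0 < i)%N -> (i <= j)%N -> w j <= w i.
Proof.
move=> i0; elim: j => [|j IH]; first by rewrite leqn0 => /eqP Hi; rewrite Hi in i0.
rewrite leq_eqVlt => /predU1P [-> // | ]; rewrite ltnS => Hij.
apply: le_trans (IH Hij); apply: L2; exact: leq_trans i0 Hij.
Qed.
Definition G (k : nat) : R := k%:R * (k%:R ^+ k / (k`!)%:R) ^+ 2.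
Lemma G_ge0 k : 0 <= G k.
Proof. by rewrite /G mulr_ge0 // exprn_ge0 // divr_ge0 // exprn_ge0. Qed.
Lemma L4 k : (0 < k)%N -> G k.+1 = w k * G k.
Proof.
move=> k0; rewrite /G /w.
have a0 : (k%:R : R) != 0 by rewrite pnatr_eq0 -lt0n.
have f0 : ((k`!)%:R : R) != 0 by rewrite pnatr_eq0 -lt0n fact_gt0.
have b0 : (k.+1%:R : R) != 0 by rewrite pnatr_eq0.
have A0 : (k%:R : R) ^+ k != 0 by rewrite expf_neq0.
have e1 : (k.+1%:R / k%:R : R)^+(2*k+1) = (k.+1%:R^+k / k%:R^+k)^+2 * (k.+1%:R / k%:R).
  by rewrite exprD expr1 mulnC exprM !expr_div_n.
have e2 : (k.+1%:R : R)^+k.+1 = k.+1%:R * k.+1%:R^+k by rewrite exprS.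
rewrite factS natrM e1 e2.
field. by rewrite f0 a0 A0 nat1r pnatr_eq0.
Qed.
Lemma G1 : G 1 = 1.
Proof. by rewrite /G (_ : 1`! = 1)%N // expr1 divr1 mul1r expr1n. Qed.
Lemma w1 : w 1 = 8.
Proof. by rewrite /w divr1 -natrX. Qed.
Lemma L6 x y : (0 < x)%N -> (0 < y)%N -> G (x + y) <= 8 * G x * G y.
Proof.
move=> + y0; elim: x => // x IH _.
case: (posnP x) => [-> | x0].
  rewrite add1n L4 // G1 mulr1 -w1; apply: ler_pM => //; [exact: w_ge0|exact: G_ge0|exact: L3].
rewrite addSn L4 ?addn_gt0 ?x0 // L4 //.
have := IH x0 => H.
rewrite (_ : 8 * (w x * G x) * G y = w x * (8 * G x * G y)); last by ring.
apply: ler_pM => //; [exact: w_ge0|exact: G_ge0|].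
apply: L3 => //; exact: leq_addr.
Qed.
Definition f (k : nat) : R := k%:R ^+ k / (k`!)%:R.
Lemma f_gt0 k : 0 < f k.
Proof.
rewrite /f divr_gt0 // ?ltr0n ?fact_gt0 //.
case: k => [|k]; first by rewrite expr0.
by rewrite exprn_gt0 // ltr0n.
Qed.
Lemma f0 : f 0 = 1.
Proof. by rewrite /f expr0 divr1. Qed.
Lemma L7 x y : f (x + y) ^+ 2 <= (2 * (x + y) + 1)%:R * f x ^+ 2 * f y ^+ 2.
Proof.
have Fx := exprn_gt0 2 (f_gt0 x); have Fy := exprn_gt0 2 (f_gt0 y).
case: (posnP x) => [-> | x0].
  rewrite f0 expr1n mulr1 add0n ler_pMl // ler1n; lia.
case: (posnP y) => [-> | y0].
  rewrite f0 expr1n mulr1 addn0 ler_pMl // ler1n; lia.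
have H : (x+y)%:R * f (x+y) ^+ 2 <= 8 * (x%:R * f x ^+ 2) * (y%:R * f y ^+ 2) := @L6 x y x0 y0.
have s0 : (0:R) < (x + y)%:R by rewrite ltr0n addn_gt0 x0.
rewrite -(ler_pM2l s0); apply: (le_trans H).
rewrite (_ : (x + y)%:R * ((2 * (x + y) + 1)%:R * f x ^+ 2 * f y ^+ 2) =
  ((x+y) * (2 * (x + y) + 1))%:R * (f x ^+ 2 * f y ^+ 2)); last by rewrite natrM; ring.
rewrite (_ : 8 * (x%:R * f x ^+ 2) * (y%:R * f y ^+ 2) = (8 * x * y)%:R * (f x ^+ 2 * f y ^+ 2)); last by rewrite !natrM; ring.
rewrite ler_pM2r; last exact: mulr_gt0 Fx Fy.
rewrite ler_nat; case: (leqP x y) => h; [rewrite -(subnK h) | rewrite -(subnK (ltnW h))]; nia.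
Qed.
Lemma mainR (n a b c d : nat) : (500 < n)%N -> (a + (b + (c + d)))%N = n ->
  1 / n%:R ^+ 2 <
  n`!%:R / (a`! * (b`! * (c`! * d`!)))%:R *
  ((a%:R / n%:R) ^+ a * ((b%:R / n%:R) ^+ b * ((c%:R / n%:R) ^+ c * (d%:R / n%:R) ^+ d))) :> R.
Proof.
move=> Hn Hs.
have N0 : (0:R) < n%:R by rewrite ltr0n; lia.
have E : n`!%:R / (a`! * (b`! * (c`! * d`!)))%:R *
  ((a%:R / n%:R) ^+ a * ((b%:R / n%:R) ^+ b * ((c%:R / n%:R) ^+ c * (d%:R / n%:R) ^+ d)))
  = f a * f b * f c * f d / f n.
  have Nn : (n%:R : R) ^+ n = n%:R ^+ a * n%:R ^+ b * n%:R ^+ c * n%:R ^+ d.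
    by rewrite -!exprD -Hs !addnA.
  have fa : forall k, ((k`!)%:R : R) != 0 by move=> k; rewrite pnatr_eq0 -lt0n fact_gt0.
  have nk : forall k, (n%:R : R) ^+ k != 0 by move=> k; rewrite expf_neq0 // lt0r_neq0.
  rewrite /f !expr_div_n Nn !natrM; field.
  by rewrite !fa !nk.
rewrite E ltr_pdivlMr ?f_gt0 // div1r ltr_pdivrMl ?(exprn_gt0 2 N0) //.
set P := f a * f b * f c * f d.
have P0 : 0 < P := mulr_gt0 (mulr_gt0 (mulr_gt0 (f_gt0 a) (f_gt0 b)) (f_gt0 c)) (f_gt0 d).
rewrite -(@ltr_pXn2r R 2) //; last 2 first.
  by rewrite nnegrE ltW ?f_gt0.
  by rewrite nnegrE ltW // mulr_gt0 // exprn_gt0.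
have h1 := L7 a (b + (c + d)); rewrite Hs in h1.
have h2 := L7 b (c + d).
have h3 := L7 c d.
set K1 := (2 * n + 1)%:R in h1.
set K2 := (2 * (b + (c + d)) + 1)%:R in h2.
set K3 := (2 * (c + d) + 1)%:R in h3.
have g0 : forall k, 0 <= f k ^+ 2 by move=> k; rewrite exprn_ge0 // ltW ?f_gt0.
have K0 : forall m, 0 <= (m%:R : R) by move=> m; rewrite ler0n.
have h2' := le_trans h2 (ler_wpM2l (mulr_ge0 (K0 _) (g0 b)) h3).
have h := le_trans h1 (ler_wpM2l (mulr_ge0 (K0 _) (g0 a)) h2').
apply: (le_lt_trans h).
have Q0 : 0 < f a ^+ 2 * f b ^+ 2 * f c ^+ 2 * f d ^+ 2.
  by apply: mulr_gt0; [apply: mulr_gt0; [apply: mulr_gt0|]|]; apply: exprn_gt0; apply: f_gt0.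
rewrite (_ : K1 * f a ^+ 2 * (K2 * f b ^+ 2 * (K3 * f c ^+ 2 * f d ^+ 2)) =
   (K1 * K2 * K3) * (f a ^+ 2 * f b ^+ 2 * f c ^+ 2 * f d ^+ 2)); last by ring.
rewrite (_ : (n%:R ^+ 2 * P) ^+ 2 = n%:R ^+ 4 * (f a ^+ 2 * f b ^+ 2 * f c ^+ 2 * f d ^+ 2)); last by rewrite /P; ring.
rewrite ltr_pM2r // /K1 /K2 /K3 -!natrM -natrX ltr_nat.
have e1 : (2 * (b + (c + d)) + 1 <= 2 * n + 1)%N by lia.
have e2 : (2 * (c + d) + 1 <= 2 * n + 1)%N by lia.
apply: (@leq_ltn_trans ((2*n+1)^3)).
  by rewrite expnS expnS expn1 mulnA; apply: leq_mul => //; apply: leq_mul.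
have : (2 * n + 1 <= 3 * n)%N by lia.
move=> h4; apply: (@leq_ltn_trans ((3*n)^3)); first by rewrite leq_exp2r.
rewrite expnMn (_ : 4 = 1 + 3)%N // expnD ltn_pmul2r ?expn_gt0; lia.
Qed.
End S.

Theorem lemma7 (R : realFieldType) (n : nat) (ns : 'I_4 -> nat) :
  (500 < n)%N -> (\sum_(i < 4) ns i)%N = n ->
  (n`!)%:R / (\prod_(i < 4) (ns i)`!)%:R
    * \prod_(i < 4) ((ns i)%:R / n%:R) ^+ (ns i)
  > 1 / (n%:R ^+ 2) :> R.
Proof.
move=> Hn; rewrite !big_ord_recl !big_ord0.
move: (ns _) => a. move: (ns _) => b. move: (ns _) => c. move: (ns _) => d.
rewrite addn0 muln1 mulr1 => Hs.
exact: mainR.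
Qed.
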